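(* Let $w=e_{a_1}\cdots e_{a_N}$ with $a_1,\dots,a_N\in\{0,1\}$, $N\ge0$, and put $\overleftarrow{w}=e_{a_N}\cdots e_{a_1}$. Then in $\mathfrak H[[s,t]]$, \begin{align*} &\sum_{v=0}^{N}(-1)^v\,(1+e_0t)^{-1}e_1e_{a_1}\cdots e_{a_v}\ ш\ (1-e_0s)^{-1}e_1e_{a_N}\cdots e_{a_{v+1}}\\ &=(1+e_0t)^{-1}\ ш\ \bigl((1-e_0s)^{-1}e_1\overleftarrow{w}e_1(1-e_0t)^{-1}\bigr)+(-1)^N(1-e_0s)^{-1}\ ш\ \bigl((1+e_0t)^{-1}e_1we_1(1+e_0s)^{-1}\bigr). \end{align*}
   Context: $\mathfrak H=\mathbb Q\langle e_0,e_1\rangle$ (noncommutative polynomials); $s,t$ commuting indeterminates; $(1\pm e_0t)^{-1}=\sum_{m\ge0}(\mp t)^me_0^m$ etc. in $\mathfrak H[[s,t]]$. The shuffle product $ш$ on $\mathfrak H$ is the $\mathbb Q$-bilinear product with $1ш w=wш1=w$ and $we_iш w'e_j=(we_iш w')e_j+(wш w'e_j)e_i$ ($w,w'\in\mathfrak H$, $i,j\in\{0,1\}$), extended bilinearly and coefficientwise to $\mathfrak H[[s,t]]$. For $v=N$ the word $e_{a_N}\cdots e_{a_{v+1}}$ is empty, and for $v=0$ the word $e_{a_1}\cdots e_{a_v}$ is empty. *)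

(* Defs.v *)
From HB Require Import structures.
From mathcomp Require Import all_boot all_order all_algebra.
Set Implicit Arguments. Unset Strict Implicit. Unset Printing Implicit Defensive.
Import Order.TTheory GRing.Theory Num.Theory.
Local Open Scope ring_scope.

(* Words in the letters e_0 (false) and e_1 (true), read left to right. *)
Definition word := seq bool.

(* Shuffle of words on reversed words (head = last letter):
   rsh (i::x) (j::y) = map (cons j) (rsh (i::x) y) ++ map (cons i) (rsh x (j::y)). *)
Fixpoint rsh (x : word) (y : word) {struct x} : seq word :=
  match x with
  | [::] => [:: y]
  | i :: x' =>
      let fix aux (y : word) : seq word :=
        match y with
        | [::] => [:: x]
        | j :: y' => map (cons j) (aux y') ++ map (cons i) (rsh x' y)
        end in aux y
  end.

(* x ш y as a list of words with multiplicities: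
   1 ш w = w ш 1 = w,  w e_i ш w' e_j = (w e_i ш w') e_j + (w ш w' e_j) e_i. *)
Definition shuffle (x y : word) : seq word := map rev (rsh (rev x) (rev y)).

Fixpoint words (n : nat) : seq word :=
  match n with
  | 0 => [:: [::]]
  | n'.+1 => [seq b :: w | b <- [:: false; true], w <- words n']
  end.

(* Elements of H[[s,t]]: F u i j = coefficient of the word u times s^i t^j. *)
Definition ser := word -> nat -> nat -> rat.

Definition swd (w : word) : ser := fun u i j => ((u == w) && (i == 0%N) && (j == 0%N))%:R.

(* gs c = sum_m (c s)^m e_0^m ;  gt c = sum_m (c t)^m e_0^m .
   So (1 - e0 s)^{-1} = gs 1, (1 + e0 s)^{-1} = gs (-1), etc. *)
Definition gs (c : rat) : ser := fun u i j =>
  if (u == nseq i false) && (j == 0%N) then c ^+ i else 0.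
Definition gt (c : rat) : ser := fun u i j =>
  if (u == nseq j false) && (i == 0%N) then c ^+ j else 0.

Definition sconc (A B : ser) : ser := fun u i j =>
  \sum_(k < (size u).+1) \sum_(i1 < i.+1) \sum_(j1 < j.+1)
     A (take k u) i1 j1 * B (drop k u) (i - i1)%N (j - j1)%N.

Definition ssh (A B : ser) : ser := fun u i j =>
  \sum_(k < (size u).+1) \sum_(x <- words k) \sum_(y <- words (size u - k))
  \sum_(i1 < i.+1) \sum_(j1 < j.+1)
     A x i1 j1 * B y (i - i1)%N (j - j1)%N * (count_mem u (shuffle x y))%:R.

(* Main.v *)
Require Import Defs.
From HB Require Import structures.
From mathcomp Require Import all_boot all_order all_algebra.
From Stdlib Require Import FunctionalExtensionality.
Import Order.TTheory GRing.Theory Num.Theory.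
Local Open Scope ring_scope.

Lemma sum_one n (F : 'I_n -> rat) (k0 : 'I_n) :
  (forall k, k != k0 -> F k = 0) -> \sum_(k < n) F k = F k0.
Proof. by move=> H; rewrite (bigD1 k0) //= big1 ?addr0 // => k /H. Qed.

Definition cauchy (f g : nat -> nat -> rat) (i j : nat) : rat :=
  \sum_(i1 < i.+1) \sum_(j1 < j.+1) f i1 j1 * g (i - i1)%N (j - j1)%N.

Lemma ssh_E A B u i j : ssh A B u i j =
  \sum_(k < (size u).+1) \sum_(x <- words k) \sum_(y <- words (size u - k))
     (count_mem u (shuffle x y))%:R * cauchy (A x) (B y) i j.
Proof.
rewrite /ssh /cauchy; apply: eq_bigr => k _; apply: eq_bigr => x _; apply: eq_bigr => y _.
rewrite mulr_sumr; apply: eq_bigr => i1 _; rewrite mulr_sumr; apply: eq_bigr => j1 _.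
by rewrite mulrC.
Qed.

Lemma ssh_nil A B i j : ssh A B [::] i j = cauchy (A [::]) (B [::]) i j.
Proof. by rewrite ssh_E big_ord1 !big_seq1 mul1r. Qed.

Lemma rev_ordE n (k : 'I_n.+1) : (rev_ord k : nat) = (n - k)%N.
Proof. by rewrite -subSS. Qed.
Lemma cauchy_comm f g i j : cauchy f g i j = cauchy g f i j.
Proof.
rewrite /cauchy (reindex_inj rev_ord_inj); apply: eq_bigr => i1 _.
rewrite (reindex_inj rev_ord_inj); apply: eq_bigr => j1 _.
rewrite !rev_ordE.
have hi : (i1 <= i)%N by rewrite -ltnS.
have hj : (j1 <= j)%N by rewrite -ltnS.
rewrite (subKn hi) (subKn hj); exact: mulrC.
Qed.

Lemma cauchy0l f g i j : (forall a b, f a b = 0) -> cauchy f g i j = 0.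
Proof.
move=> H; rewrite /cauchy big1 => [//|i1 _]; rewrite big1 => [//|j1 _]; rewrite H; exact: mul0r. Qed.

Definition tsh2 (d : rat) (f : nat -> nat -> rat) : nat -> nat -> rat :=
  fun a b => if b is b'.+1 then d * f a b' else 0.
Definition ssh2 (d : rat) (f : nat -> nat -> rat) : nat -> nat -> rat :=
  fun a b => if a is a'.+1 then d * f a' b else 0.

Lemma cauchy_tsh d f g i j : cauchy (tsh2 d f) g i j = tsh2 d (cauchy f g) i j.
Proof.
rewrite /cauchy /tsh2; case: j => [|j].
  apply: big1 => i1 _; rewrite big_ord1; exact: mul0r.
rewrite mulr_sumr; apply: eq_bigr => i1 _; rewrite big_ord_recl mul0r add0r mulr_sumr.
apply: eq_bigr => j1 _; by rewrite lift0 subSS mulrA.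
Qed.

Lemma cauchy_ssh d f g i j : cauchy (ssh2 d f) g i j = ssh2 d (cauchy f g) i j.
Proof.
rewrite /cauchy /ssh2; case: i => [|i].
  rewrite big_ord1; apply: big1 => j1 _; exact: mul0r.
rewrite big_ord_recl big1 ?add0r => [|j1 _]; last exact: mul0r.
rewrite mulr_sumr; apply: eq_bigr => i1 _; rewrite mulr_sumr.
apply: eq_bigr => j1 _; by rewrite lift0 subSS mulrA.
Qed.


Lemma count_rev (s : word) (L : seq word) :
  count_mem s (map rev L) = count_mem (rev s) L.
Proof.
rewrite count_map; apply: eq_count => z /=.
by apply/eqP/eqP => [<-|->]; rewrite revK.
Qed.

Lemma count_cons_map (b c : bool) (r : word) (L : seq word) :
  count_mem (c :: r) (map (cons b) L) = ((b == c) * count_mem r L)%N.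
Proof.
elim: L => [|z L IH] /=; first by rewrite muln0.
rewrite IH eqseq_cons mulnDr; by case: (b == c); rewrite ?mul1n ?mul0n.
Qed.

Lemma rsh_nil_r X : rsh X [::] = [:: X].
Proof. by case: X. Qed.

Lemma rsh_cons2 b b' X Y : rsh (b :: X) (b' :: Y) =
  map (cons b') (rsh (b :: X) Y) ++ map (cons b) (rsh X (b' :: Y)).
Proof. by []. Qed.

Lemma rsh_count (c : bool) (r X Y : word) :
  count_mem (c :: r) (rsh X Y) =
  ((if X is b :: X' then (b == c) * count_mem r (rsh X' Y) else 0)
  + (if Y is b :: Y' then (b == c) * count_mem r (rsh X Y') else 0))%N.
Proof.
case: X => [|b X]; case: Y => [|b' Y]; try by [].
- rewrite /= add0n !addn0 eqseq_cons; by case: (b' == c); case: (Y == r).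
- rewrite !rsh_nil_r /= !addn0 eqseq_cons; by case: (b == c); case: (X == r).
- rewrite rsh_cons2 count_cat !count_cons_map; exact: addnC.
Qed.

Definition cnt1 c w (x y : word) : nat :=
  if rev x is b :: xr then (b == c) * count_mem w (shuffle (rev xr) y) else 0.
Definition cnt2 c w (x y : word) : nat :=
  if rev y is b :: yr then (b == c) * count_mem w (shuffle x (rev yr)) else 0.

Lemma cnt_rcons c w x y :
  count_mem (rcons w c) (shuffle x y) = (cnt1 c w x y + cnt2 c w x y)%N.
Proof.
rewrite /cnt1 /cnt2 /shuffle !count_rev rev_rcons rsh_count.
case: (rev x) => [|b xr]; case: (rev y) => [|b' yr]; by rewrite ?count_rev ?revK.
Qed.

Lemma words_cons n (F : word -> rat) :
  \sum_(x <- words n.+1) F x = \sum_(b <- [:: false; true]) \sum_(w <- words n) F (b :: w).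
Proof. rewrite [words _]/= !big_cat big_nil !big_map !big_cons big_nil; reflexivity. Qed.

Lemma words_rcons n (F : word -> rat) :
  \sum_(x <- words n.+1) F x = \sum_(x <- words n) \sum_(b <- [:: false; true]) F (rcons x b).
Proof.
elim: n F => [|n IH] F.
  rewrite words_cons !big_cons !big_nil !addr0; reflexivity.
rewrite words_cons. rewrite (words_cons n). apply: eq_bigr => b _.
by rewrite IH.
Qed.


Definition D (b : bool) (X : ser) : ser := fun u i j => X (rcons u b) i j.

Lemma sum_bool_eq (c : bool) (F : bool -> rat) :
  \sum_(b <- [:: false; true]) (b == c)%:R * F b = F c.
Proof. rewrite !big_cons big_nil; case: c => /=; rewrite ?mul1r ?mul0r ?add0r ?addr0; reflexivity. Qed.

Lemma sshD X Y w c i j :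
  ssh X Y (rcons w c) i j = ssh (D c X) Y w i j + ssh X (D c Y) w i j.
Proof.
rewrite !ssh_E size_rcons.
under eq_bigr => k _ do under eq_bigr => x _ do under eq_bigr => y _ do
  rewrite cnt_rcons natrD mulrDl.
under eq_bigr => k _ do under eq_bigr => x _ do rewrite big_split.
under eq_bigr => k _ do rewrite big_split.
rewrite big_split; congr (_ + _).
- rewrite big_ord_recl big_seq1 big1 => [|y _]; last by rewrite /cnt1 /= mul0r.
  rewrite Monoid.mul1m; apply: eq_bigr => k _; rewrite lift0 subSS words_rcons.
  apply: eq_bigr => x _.
  rewrite exchange_big /=.
  under eq_bigr => b _ do under eq_bigr => y _ do rewrite /cnt1 rev_rcons revK natrM -mulrA.
  apply: eq_bigr => y _; rewrite sum_bool_eq; reflexivity.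
- rewrite big_ord_recr /= subnn.
  rewrite [X in _ + X = _]big1 => [|x _]; last first.
    by rewrite big_seq1 /cnt2 /= mul0r.
  rewrite addr0; apply: eq_bigr => k _.
  have hk : (k <= size w)%N by rewrite -ltnS.
  rewrite /= (subSn hk); apply: eq_bigr => x _; rewrite words_rcons.
  apply: eq_bigr => y _; under eq_bigr => b _ do rewrite /cnt2 rev_rcons revK natrM -mulrA.
  rewrite sum_bool_eq; reflexivity.
Qed.

Lemma ssh_comm X Y u i j : ssh X Y u i j = ssh Y X u i j.
Proof.
elim/last_ind: u X Y i j => [|w c IH] X Y i j.
  by rewrite !ssh_nil cauchy_comm.
by rewrite !sshD IH [ssh X (D c Y) w i j]IH addrC.
Qed.

Definition zs : ser := fun _ _ _ => 0.

Lemma ssh_zs X u i j : ssh zs X u i j = 0.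
Proof.
rewrite ssh_E; apply: big1 => k _; apply: big1 => x _; apply: big1 => y _.
by rewrite cauchy0l ?mulr0.
Qed.

Lemma ssh_zs_r X u i j : ssh X zs u i j = 0.
Proof. by rewrite ssh_comm ssh_zs. Qed.

Lemma ssh_nil0 X Y i j : (forall a b, X [::] a b = 0) -> ssh X Y [::] i j = 0.
Proof. by move=> H; rewrite ssh_nil cauchy0l. Qed.

Lemma ssh_nil0_r X Y i j : (forall a b, Y [::] a b = 0) -> ssh X Y [::] i j = 0.
Proof. by move=> H; rewrite ssh_comm ssh_nil0. Qed.

Definition tshc (d : rat) (X : ser) : ser := fun u => tsh2 d (X u).
Definition sshc (d : rat) (X : ser) : ser := fun u => ssh2 d (X u).

Lemma ssh_tshc X Y d u i j : ssh (tshc d X) Y u i j = tsh2 d (ssh X Y u) i j.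
Proof.
rewrite ssh_E; case: j => [|j].
  apply: big1 => k _; apply: big1 => x _; apply: big1 => y _.
  by rewrite [tshc d X x]/tshc cauchy_tsh /= mulr0.
rewrite [RHS]/tsh2 ssh_E mulr_sumr; apply: eq_bigr => k _; rewrite mulr_sumr; apply: eq_bigr => x _.
rewrite mulr_sumr; apply: eq_bigr => y _; rewrite [tshc d X x]/tshc cauchy_tsh [tsh2 _ _ _ _]/tsh2.
by rewrite mulrCA.
Qed.

Lemma ssh_sshc X Y d u i j : ssh (sshc d X) Y u i j = ssh2 d (ssh X Y u) i j.
Proof.
rewrite ssh_E; case: i => [|i].
  apply: big1 => k _; apply: big1 => x _; apply: big1 => y _.
  by rewrite [sshc d X x]/sshc cauchy_ssh /= mulr0.
rewrite [RHS]/ssh2 ssh_E mulr_sumr; apply: eq_bigr => k _; rewrite mulr_sumr; apply: eq_bigr => x _.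
rewrite mulr_sumr; apply: eq_bigr => y _; rewrite [sshc d X x]/sshc cauchy_ssh [ssh2 _ _ _ _]/ssh2.
by rewrite mulrCA.
Qed.

Lemma ssh_tshc_r X Y d u i j : ssh X (tshc d Y) u i j = tsh2 d (ssh X Y u) i j.
Proof. by rewrite ssh_comm ssh_tshc; case: j => //= j; rewrite ssh_comm. Qed.

Lemma ssh_sshc_r X Y d u i j : ssh X (sshc d Y) u i j = ssh2 d (ssh X Y u) i j.
Proof. by rewrite ssh_comm ssh_sshc; case: i => //= i; rewrite ssh_comm. Qed.


Lemma size_takeo (u : word) (k : 'I_(size u).+1) : size (take k u) = k.
Proof. by rewrite size_take_min; apply/minn_idPl; rewrite -ltnS. Qed.

Lemma take_nseq_neq (u : word) (k : 'I_(size u).+1) (n : nat) :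
  n != (k : nat) -> (take k u == nseq n false) = false.
Proof.
move=> ne; apply/eqP => E; move: (congr1 size E); rewrite size_takeo size_nseq => E'.
by rewrite -E' eqxx in ne.
Qed.

Lemma sconc_gsE c B u i j : sconc (gs c) B u i j =
  \sum_(k < (size u).+1) (k <= i)%:R *
     ((take k u == nseq k false)%:R * c ^+ k * B (drop k u) (i - k)%N j).
Proof.
rewrite /sconc; apply: eq_bigr => k _.
rewrite (eq_bigr (fun i1 : 'I_i.+1 => gs c (take k u) i1 0 * B (drop k u) (i - i1)%N j)); last first.
  move=> i1 _; rewrite (sum_one _ _ ord0) ?subn0 // => j1 nz; rewrite /gs.
  have -> : ((j1 : nat) == 0%N) = false by exact: negbTE nz.
  by rewrite andbF mul0r.
case: (leqP k i) => hk.
- have hk' : (k < i.+1)%N by rewrite ltnS.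
  rewrite (sum_one _ _ (Ordinal hk')) /=.
    rewrite mul1r /gs andbT; case: ifP => _; by rewrite ?mul1r ?mul0r.
  move=> i1 ne; rewrite /gs take_nseq_neq ?mul0r //.
- rewrite mul0r; apply: big1 => i1 _; rewrite /gs take_nseq_neq ?mul0r //.
  by rewrite neq_ltn (leq_ltn_trans _ hk) // -ltnS.
Qed.

Lemma sconc_gtE c B u i j : sconc (gt c) B u i j =
  \sum_(k < (size u).+1) (k <= j)%:R *
     ((take k u == nseq k false)%:R * c ^+ k * B (drop k u) i (j - k)%N).
Proof.
rewrite /sconc; apply: eq_bigr => k _.
rewrite (sum_one _ _ ord0); last first.
  move=> i1 nz; apply: big1 => j1 _; rewrite /gt.
  have -> : ((i1 : nat) == 0%N) = false by exact: negbTE nz.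
  by rewrite andbF mul0r.
rewrite subn0.
case: (leqP k j) => hk.
- have hk' : (k < j.+1)%N by rewrite ltnS.
  rewrite (sum_one _ _ (Ordinal hk')) /=.
    rewrite mul1r /gt andbT; case: ifP => _; by rewrite ?mul1r ?mul0r.
  move=> j1 ne; rewrite /gt take_nseq_neq ?mul0r //.
- rewrite mul0r; apply: big1 => j1 _; rewrite /gt take_nseq_neq ?mul0r //.
  by rewrite neq_ltn (leq_ltn_trans _ hk) // -ltnS.
Qed.

Lemma sconc_swdE w B u i j : sconc (swd w) B u i j =
  (take (size w) u == w)%:R * B (drop (size w) u) i j.
Proof.
rewrite /sconc.
have inner : forall k : 'I_(size u).+1,
  \sum_(i1 < i.+1) \sum_(j1 < j.+1) swd w (take k u) i1 j1 * B (drop k u) (i - i1)%N (j - j1)%N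
  = (take k u == w)%:R * B (drop k u) i j.
  move=> k; rewrite (sum_one _ _ ord0); last first.
    move=> i1 nz; apply: big1 => j1 _; rewrite /swd.
    have -> : ((i1 : nat) == 0%N) = false by exact: negbTE nz.
    by rewrite andbF /= mul0r.
  rewrite (sum_one _ _ ord0); last first.
    move=> j1 nz; rewrite /swd.
    have -> : ((j1 : nat) == 0%N) = false by exact: negbTE nz.
    by rewrite andbF /= mul0r.
  by rewrite /swd /= !andbT !subn0.
rewrite (eq_bigr _ (fun k _ => inner k)).
case: (leqP (size w) (size u)) => hw.
- have hw' : (size w < (size u).+1)%N by rewrite ltnS.
  rewrite (sum_one _ _ (Ordinal hw')) // => k ne.
  have -> : (take k u == w) = false.
    apply/eqP => E; move: (congr1 size E); rewrite size_takeo => E'.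
    by move: ne; rewrite -val_eqE /= E' eqxx.
  by rewrite mul0r.
- rewrite big1 => [|k _].
    rewrite take_oversize ?(ltnW hw) //.
    have -> : (u == w) = false by apply/eqP => E; rewrite E ltnn in hw.
    by rewrite mul0r.
  have -> : (take k u == w) = false.
    apply/eqP => E; move: (congr1 size E); rewrite size_takeo => E'.
    by move: (ltn_ord k); rewrite E' ltnS leqNgt hw.
  by rewrite mul0r.
Qed.


Lemma ser_ext (X Y : ser) : (forall u i j, X u i j = Y u i j) -> X = Y.
Proof.
move=> H; apply: functional_extensionality => u; apply: functional_extensionality => i.
apply: functional_extensionality => j; exact: H.
Qed.

Lemma cat_eq (u p q : word) :
  (u == p ++ q) = (take (size p) u == p) && (drop (size p) u == q).
Proof.
apply/eqP/andP => [->|[/eqP E1 /eqP E2]].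
  by rewrite take_size_cat // drop_size_cat.
by rewrite -(cat_take_drop (size p) u) E1 E2.
Qed.

Lemma sum_diag (u : word) i (F : nat -> nat -> rat) :
  (forall k a, a != 0%N -> F k a = 0) ->
  \sum_(k < (size u).+1) (k <= i)%:R * F k (i - k)%N = (i <= size u)%:R * F i 0%N.
Proof.
move=> H; case: (leqP i (size u)) => hi.
- have hi' : (i < (size u).+1)%N by rewrite ltnS.
  rewrite (sum_one _ _ (Ordinal hi')) /= ?leqnn ?subnn // => k ne.
  case: (leqP k i) => hk; last by rewrite mul0r.
  rewrite H ?mulr0 // subn_eq0 -ltnNge ltn_neqAle hk andbT.
  by move: ne; rewrite -val_eqE.
- rewrite mul0r; apply: big1 => k _.
  rewrite H ?mulr0 // subn_eq0 -ltnNge.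
  by apply: leq_ltn_trans hi; rewrite -ltnS.
Qed.

Lemma size_cat_nseq_gt (u q : word) i : (size u < i)%N -> (u == nseq i false ++ q) = false.
Proof.
move=> h; apply/eqP => E; move: h; rewrite E size_cat size_nseq.
by rewrite ltnNge leq_addr.
Qed.

Definition cs (c : rat) (w : word) : ser := fun u i j =>
  if (u == nseq i false ++ w) && (j == 0%N) then c ^+ i else 0.
Definition ct (c : rat) (w : word) : ser := fun u i j =>
  if (u == nseq j false ++ w) && (i == 0%N) then c ^+ j else 0.
Definition rst (c d : rat) (w : word) : ser := fun u i j =>
  if u == nseq i false ++ w ++ nseq j false then c ^+ i * d ^+ j else 0.
Definition rts (c d : rat) (w : word) : ser := fun u i j =>
  if u == nseq j false ++ w ++ nseq i false then c ^+ j * d ^+ i else 0.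

Lemma cs_E c w : sconc (gs c) (swd w) = cs c w.
Proof.
apply: ser_ext => u i j; rewrite sconc_gsE.
have := sum_diag u i (fun k a => (take k u == nseq k false)%:R * c ^+ k * swd w (drop k u) a j).
move=> /= ->; last by move=> k a /negbTE na; rewrite /swd na andbF mulr0.
rewrite /cs; case: (leqP i (size u)) => hi; last by rewrite size_cat_nseq_gt // mul0r.
rewrite mul1r /swd cat_eq size_nseq.
case: (take i u == nseq i false); case: (drop i u == w); case: (j == 0%N);
  by rewrite /= ?mul0r ?mulr0 ?mul1r ?mulr1.
Qed.

Lemma ct_E c w : sconc (gt c) (swd w) = ct c w.
Proof.
apply: ser_ext => u i j; rewrite sconc_gtE.
have := sum_diag u j (fun k a => (take k u == nseq k false)%:R * c ^+ k * swd w (drop k u) i a).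
move=> /= ->; last by move=> k a /negbTE na; rewrite /swd na andbF mulr0.
rewrite /ct; case: (leqP j (size u)) => hj; last by rewrite size_cat_nseq_gt // mul0r.
rewrite mul1r /swd cat_eq size_nseq.
case: (take j u == nseq j false); case: (drop j u == w); case: (i == 0%N);
  by rewrite /= ?mul0r ?mulr0 ?mul1r ?mulr1.
Qed.

Lemma rst_E c d w : sconc (gs c) (sconc (swd w) (gt d)) = rst c d w.
Proof.
apply: ser_ext => u i j; rewrite sconc_gsE.
have := sum_diag u i (fun k a => (take k u == nseq k false)%:R * c ^+ k *
                                sconc (swd w) (gt d) (drop k u) a j).
move=> /= ->; last by move=> k a /negbTE na; rewrite sconc_swdE /gt na andbF !mulr0.
rewrite /rst; case: (leqP i (size u)) => hi; last by rewrite size_cat_nseq_gt // mul0r.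
rewrite mul1r sconc_swdE /gt cat_eq size_nseq cat_eq.
case: (take i u == nseq i false); case: (take (size w) (drop i u) == w);
  case: (drop (size w) (drop i u) == nseq j false);
  by rewrite /= ?mul0r ?mulr0 ?mul1r ?mulr1.
Qed.

Lemma rts_E c d w : sconc (gt c) (sconc (swd w) (gs d)) = rts c d w.
Proof.
apply: ser_ext => u i j; rewrite sconc_gtE.
have := sum_diag u j (fun k a => (take k u == nseq k false)%:R * c ^+ k *
                                sconc (swd w) (gs d) (drop k u) i a).
move=> /= ->; last by move=> k a /negbTE na; rewrite sconc_swdE /gs na andbF !mulr0.
rewrite /rts; case: (leqP j (size u)) => hj; last by rewrite size_cat_nseq_gt // mul0r.
rewrite mul1r sconc_swdE /gs cat_eq size_nseq cat_eq.
case: (take j u == nseq j false); case: (take (size w) (drop j u) == w);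
  case: (drop (size w) (drop j u) == nseq i false);
  by rewrite /= ?mul0r ?mulr0 ?mul1r ?mulr1.
Qed.


Lemma nseqS_rcons n (x : bool) : nseq n.+1 x = rcons (nseq n x) x.
Proof. by elim: n => //= n <-. Qed.

Lemma rcons_nil_eq (u : word) b : (rcons u b == [::]) = false.
Proof. by case: u. Qed.

Lemma D_cs b c w x : D b (cs c (rcons w x)) = if b == x then cs c w else zs.
Proof.
apply: ser_ext => u i j; rewrite /D /cs -rcons_cat eqseq_rcons.
by case: (b == x); rewrite ?andbT ?andbF.
Qed.

Lemma D_ct b c w x : D b (ct c (rcons w x)) = if b == x then ct c w else zs.
Proof.
apply: ser_ext => u i j; rewrite /D /ct -rcons_cat eqseq_rcons.
by case: (b == x); rewrite ?andbT ?andbF.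
Qed.

Lemma cs_nil c : cs c [::] = gs c.
Proof. by apply: ser_ext => u i j; rewrite /cs cats0. Qed.

Lemma ct_nil c : ct c [::] = gt c.
Proof. by apply: ser_ext => u i j; rewrite /ct cats0. Qed.

Lemma D_gs_true c : D true (gs c) = zs.
Proof.
apply: ser_ext => u i j; rewrite /D /gs /zs; case: i => [|i].
  by rewrite /= rcons_nil_eq.
by rewrite nseqS_rcons eqseq_rcons andbF.
Qed.

Lemma D_gt_true c : D true (gt c) = zs.
Proof.
apply: ser_ext => u i j; rewrite /D /gt /zs; case: j => [|j].
  by rewrite /= rcons_nil_eq.
by rewrite nseqS_rcons eqseq_rcons andbF.
Qed.

Lemma D_gs_false c : D false (gs c) = sshc c (gs c).
Proof.
apply: ser_ext => u i j; rewrite /D /gs /sshc /ssh2; case: i => [|i].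
  by rewrite /= rcons_nil_eq.
rewrite nseqS_rcons eqseq_rcons eqxx andbT.
by case: ((u == nseq i false) && (j == 0%N)); rewrite ?exprS ?mulr0.
Qed.

Lemma D_gt_false c : D false (gt c) = tshc c (gt c).
Proof.
apply: ser_ext => u i j; rewrite /D /gt /tshc /tsh2; case: j => [|j].
  by rewrite /= rcons_nil_eq.
rewrite nseqS_rcons eqseq_rcons eqxx andbT.
by case: ((u == nseq j false) && (i == 0%N)); rewrite ?exprS ?mulr0.
Qed.

Lemma D_rst_true c d w : D true (rst c d (rcons w true)) = cs c w.
Proof.
apply: ser_ext => u i j; rewrite /D /rst /cs; case: j => [|j].
  by rewrite cats0 -rcons_cat eqseq_rcons eqxx !andbT expr0 mulr1.
by rewrite nseqS_rcons -!rcons_cat eqseq_rcons !andbF.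
Qed.

Lemma D_rst_false c d w :
  D false (rst c d (rcons w true)) = tshc d (rst c d (rcons w true)).
Proof.
apply: ser_ext => u i j; rewrite /D /rst /tshc /tsh2; case: j => [|j].
  by rewrite cats0 -rcons_cat eqseq_rcons andbF.
rewrite nseqS_rcons -!rcons_cat eqseq_rcons eqxx andbT.
by case: (u == _); [rewrite exprS mulrCA | rewrite mulr0].
Qed.

Lemma D_rts_true c d w : D true (rts c d (rcons w true)) = ct c w.
Proof.
apply: ser_ext => u i j; rewrite /D /rts /ct; case: i => [|i].
  by rewrite cats0 -rcons_cat eqseq_rcons eqxx !andbT expr0 mulr1.
by rewrite nseqS_rcons -!rcons_cat eqseq_rcons !andbF.
Qed.

Lemma D_rts_false c d w :
  D false (rts c d (rcons w true)) = sshc d (rts c d (rcons w true)).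
Proof.
apply: ser_ext => u i j; rewrite /D /rts /sshc /ssh2; case: i => [|i].
  by rewrite cats0 -rcons_cat eqseq_rcons andbF.
rewrite nseqS_rcons -!rcons_cat eqseq_rcons eqxx andbT.
by case: (u == _); [rewrite exprS mulrCA | rewrite mulr0].
Qed.


Lemma telescope N (F1 F2 T : nat -> rat) :
  (forall v, (v < N)%N -> F1 v.+1 = T v) -> (forall v, (v < N)%N -> F2 v = T v) ->
  \sum_(v < N.+1) (-1) ^+ v * (F1 v + F2 v) = F1 0%N + (-1) ^+ N * F2 N.
Proof.
move=> H1 H2.
have e1 : \sum_(v < N.+1) (-1) ^+ v * F1 v = F1 0%N + \sum_(v < N) - ((-1) ^+ v * T v).
  rewrite big_ord_recl; congr (_ + _); first by rewrite expr0 mul1r.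
  by apply: eq_bigr => v _; rewrite lift0 H1 // exprS mulN1r mulNr.
have e2 : \sum_(v < N.+1) (-1) ^+ v * F2 v = \sum_(v < N) (-1) ^+ v * T v + (-1) ^+ N * F2 N.
  rewrite big_ord_recr; congr (_ + _).
  apply: eq_bigr => v _; rewrite H2; [reflexivity | exact: (ltn_ord v)].
transitivity (\sum_(v < N.+1) (-1) ^+ v * F1 v + \sum_(v < N.+1) (-1) ^+ v * F2 v).
  rewrite -big_split; apply: eq_bigr => v _; exact: mulrDr.
rewrite e1 e2 sumrN addrA addrNK; reflexivity.
Qed.

Lemma ct_nil0 c w i j : ct c (true :: w) [::] i j = 0.
Proof. by rewrite /ct; case: j. Qed.
Lemma cs_nil0 c w i j : cs c (true :: w) [::] i j = 0.
Proof. by rewrite /cs; case: i. Qed.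
Lemma rst_nil0 c d w i j : rst c d (true :: w) [::] i j = 0.
Proof. by rewrite /rst; case: i. Qed.
Lemma rts_nil0 c d w i j : rts c d (true :: w) [::] i j = 0.
Proof. by rewrite /rts; case: j. Qed.

Lemma ifTT (A B : ser) : (if true then A else B) = A. Proof. by []. Qed.
Lemma ifFF (A B : ser) : (if false then A else B) = B. Proof. by []. Qed.
Lemma fteq : (false == true) = false. Proof. by []. Qed.
Lemma tteq : (true == true) = true. Proof. by []. Qed.
Lemma tsh2_0 d f i : tsh2 d f i 0 = 0. Proof. by []. Qed.
Lemma tsh2_S d f i j : tsh2 d f i j.+1 = d * f i j. Proof. by []. Qed.
Lemma ssh2_0 d f j : ssh2 d f 0 j = 0. Proof. by []. Qed.
Lemma ssh2_S d f i j : ssh2 d f i.+1 j = d * f i j. Proof. by []. Qed.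

Lemma D_ct_eq c w x : D x (ct c (rcons w x)) = ct c w.
Proof. by rewrite D_ct eqxx. Qed.
Lemma D_ct_neq b c w x : b != x -> D b (ct c (rcons w x)) = zs.
Proof. by move=> /negbTE h; rewrite D_ct h. Qed.
Lemma D_cs_eq c w x : D x (cs c (rcons w x)) = cs c w.
Proof. by rewrite D_cs eqxx. Qed.
Lemma D_cs_neq b c w x : b != x -> D b (cs c (rcons w x)) = zs.
Proof. by move=> /negbTE h; rewrite D_cs h. Qed.

Definition P (a : seq bool) v := ct (-1) (true :: take v a).
Definition Q (a : seq bool) v := cs 1 (true :: rev (drop v a)).

Theorem mainTheorem18 (a : seq bool) :
  forall (u : word) (i j : nat),
    \sum_(v < (size a).+1)
       (-1) ^+ v * ssh (sconc (gt (-1)) (swd (true :: take v a)))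
                       (sconc (gs 1) (swd (true :: rev (drop v a)))) u i j
  = ssh (gt (-1)) (sconc (gs 1) (sconc (swd (true :: rev a ++ [:: true])) (gt 1))) u i j
    + (-1) ^+ (size a)
      * ssh (gs 1) (sconc (gt (-1)) (sconc (swd (true :: a ++ [:: true])) (gs (-1)))) u i j.
Proof.
move=> u i j.
under eq_bigr => v _ do rewrite ct_E cs_E.
rewrite rst_E rts_E !cats1.
case/lastP: u => [|w c].
  rewrite big1 => [|v _]; last by rewrite ssh_nil0 ?mulr0 // => x y; rewrite ct_nil0.
  rewrite !ssh_nil0_r ?mulr0 ?addr0 // => x y; by rewrite ?rst_nil0 ?rts_nil0.
under eq_bigr => v _ do rewrite sshD.
set N := size a.
rewrite (telescope _ (fun v => ssh (D c (P a v)) (Q a v) w i j)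
                   (fun v => ssh (P a v) (D c (Q a v)) w i j)
                   (fun v => if c == nth false a v then ssh (P a v) (Q a v.+1) w i j else 0)).
- rewrite [P a 0]/P take0 [Q a N]/Q drop_size.
  have e1 : [:: true] = rcons [::] true by [].
  rewrite e1 !sshD.
  rewrite -[true :: rcons (rev a) true]/(rcons (true :: rev a) true).
  rewrite -[true :: rcons a true]/(rcons (true :: a) true).
  case: c.
  + rewrite D_ct_eq D_cs_eq ct_nil cs_nil.
    rewrite D_gt_true D_rst_true D_gs_true D_rts_true !ssh_zs !add0r.
    rewrite /Q drop0 /P /N take_size [ssh (ct _ _) (gs 1) _ _ _]ssh_comm; reflexivity.
  + rewrite D_ct_neq // D_cs_neq // ssh_zs ssh_zs_r mulr0 addr0.
    rewrite D_gt_false D_rst_false D_gs_false D_rts_false.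
    rewrite ssh_tshc ssh_tshc_r ssh_sshc ssh_sshc_r.
    case: j => [|j]; case: i => [|i];
      rewrite ?tsh2_0 ?tsh2_S ?ssh2_0 ?ssh2_S ?mulr0 ?addr0;
      rewrite ?mulN1r ?mul1r ?addNr ?addrN ?mulr0 ?addr0 ?add0r; reflexivity.
- move=> v hv; rewrite /P (take_nth false hv).
  rewrite -[true :: rcons (take v a) (nth false a v)]/(rcons (true :: take v a) (nth false a v)).
  case: (eqVneq c (nth false a v)) => [->|ne].
    by rewrite D_ct_eq.
  by rewrite D_ct_neq // ssh_zs.
- move=> v hv; rewrite /Q (drop_nth false hv) rev_cons.
  rewrite -[true :: rcons (rev (drop v.+1 a)) (nth false a v)]/(rcons (true :: rev (drop v.+1 a)) (nth false a v)).
  case: (eqVneq c (nth false a v)) => [->|ne].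
    by rewrite D_cs_eq.
  by rewrite D_cs_neq // ssh_zs_r.
Qed.
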